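(* Under Assumption A, for every $k\in[K]$, $$\Theta_k-\Theta_0=(H^\top B_k^\top\mathbf e_{i_k})^{\otimes 2}-(H^\top B_0^\top\mathbf e_{i_k})^{\otimes 2}.$$ In particular, $\mathrm{rank}(\Theta_k-\Theta_0)=1$ if $i_k$ is a source node of $\mathcal G$, and $\mathrm{rank}(\Theta_k-\Theta_0)=2$ otherwise.
   Context: Notation: $[d]=\{1,\dots,d\}$, $\mathbf e_i$ standard basis vectors, $\mathbf v^{\otimes 2}:=\mathbf v\mathbf v^\top$, $M^\dagger$ the Moore–Penrose pseudoinverse. Assumption A (model). $\mathcal G$ is a DAG on $[d]$ whose nodes are ordered so that every edge $j\to i$ has $j>i$; a source node has no parents. Contexts $k\in\{0\}\cup[K]$. For each $k$, $A_k\in\mathbb R^{d\times d}$ has zero diagonal and $(A_k)_{ij}=0$ unless $j\to i$ is an edge of $\mathcal G$, and $(A_0)_{ij}\neq 0$ iff $j\to i$ is an edge; $\Omega_k$ is diagonal with positive diagonal; $B_k:=\Omega_k^{-1/2}(I_d-A_k)$. In context $k$, $Z=B_k^{-1}\varepsilon$ with $\mathrm{Cov}(\varepsilon)=I_d$. For each $k\in[K]$ there exist $i_k\in[d]$ and $\mathbf c_k\in\mathbb R^d$ with $B_k=B_0+\mathbf e_{i_k}\mathbf c_k^\top$, and $B_k^\top\mathbf e_{i_k}$ is not a scalar multiple of $B_0^\top\mathbf e_{i_k}$ unless $i_k$ is a source. $G\in\mathbb R^{p\times d}$ ($p\ge d$) has rank $d$, $X=GZ$ in every context, $H:=G^\dagger\in\mathbb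 R^{d\times p}$, normalized so that in each row of $H$ the maximum absolute value of the entries is $1$ and the leftmost entry of absolute value $1$ equals $1$. The precision matrices are $\Theta_k:=\mathbb E[XX^\top]^\dagger=H^\top B_k^\top B_kH$. *)

(* Defs.v *)
From HB Require Import structures.
From mathcomp Require Import all_boot all_order all_algebra.
From mathcomp Require Import reals.
Set Implicit Arguments. Unset Strict Implicit. Unset Printing Implicit Defensive.
Import Order.TTheory GRing.Theory Num.Theory.
Local Open Scope ring_scope.

Section Defs.
Variable R : realType.
Variable d : nat.

Definition invsqrt_diag (Om : 'M[R]_d) : 'M[R]_d :=
  \matrix_(i, j) (if i == j then (Num.sqrt (Om i i))^-1 else 0).

Definition Bmat (Om A : 'M[R]_d) : 'M[R]_d := invsqrt_diag Om *m (1%:M - A).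

Definition evec (i : 'I_d) : 'cV[R]_d := delta_mx i ord0.

Definition outer (v : 'cV[R]_d) : 'M[R]_d := v *m v^T.

Definition is_MP_pinv (p : nat) (G : 'M[R]_(p, d)) (H : 'M[R]_(d, p)) : Prop :=
  [/\ G *m H *m G = G, H *m G *m H = H,
      (G *m H)^T = G *m H & (H *m G)^T = H *m G].

Definition rows_normalized (p : nat) (H : 'M[R]_(d, p)) : Prop :=
  forall r : 'I_d, exists j : 'I_p,
    [/\ H r j = 1, (forall j' : 'I_p, `|H r j'| <= 1)
      & (forall j' : 'I_p, (j' < j)%N -> `|H r j'| < 1)].

Definition Theta (p : nat) (H : 'M[R]_(d, p)) (Om A : 'M[R]_d) : 'M[R]_p :=
  H^T *m (Bmat Om A)^T *m Bmat Om A *m H.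
End Defs.

(* edge j i  means  j -> i ;  i is a source iff it has no parent *)
Definition is_source (d : nat) (edge : rel 'I_d) (i : 'I_d) : Prop :=
  forall j : 'I_d, ~~ edge j i.

(* Main.v *)
Require Import Defs.
From HB Require Import structures.
From mathcomp Require Import all_boot all_order all_algebra.
From mathcomp Require Import reals.
Import Order.TTheory GRing.Theory Num.Theory.
Local Open Scope ring_scope.

Lemma Bmat_entry (R : realType) d (Om A : 'M[R]_d) i j :
  Bmat Om A i j = (Num.sqrt (Om i i))^-1 * ((i == j)%:R - A i j).
Proof.
rewrite /Bmat mxE (bigD1 i) //= big1 ?addr0.
  by rewrite !mxE eqxx.
by move=> l /negbTE nl; rewrite !mxE eq_sym nl mul0r.
Qed.

Lemma col_entry (R : realType) d (B : 'M[R]_d) i j :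
  (B^T *m evec R i) j 0 = B i j.
Proof. by rewrite /evec -colE !mxE. Qed.

Lemma evec_entry (R : realType) d (i j : 'I_d) : evec R i j 0 = (i == j)%:R.
Proof. by rewrite /evec mxE eqxx andbT eq_sym. Qed.

Lemma evecTe (R : realType) d (i : 'I_d) : (evec R i)^T *m evec R i = 1%:M.
Proof.
rewrite /evec trmx_delta mul_delta_mx.
by apply/matrixP => a b; rewrite !ord1 !mxE.
Qed.
Lemma zm_aux (V : zmodType) (a b z : V) : a + b + z - a = b + z.
Proof. by rewrite addrAC [a + b]addrC addrK. Qed.
Lemma diff_outer (F : comPzRingType) n (B0 : 'M[F]_n) (e c : 'cV_n) :
  e^T *m e = 1%:M ->
  (B0 + e *m c^T)^T *m (B0 + e *m c^T) - B0^T *m B0 =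
  ((B0 + e *m c^T)^T *m e) *m ((B0 + e *m c^T)^T *m e)^T
  - (B0^T *m e) *m (B0^T *m e)^T.
Proof.
move=> He.
have HT : (B0 + e *m c^T)^T = B0^T + c *m e^T by rewrite linearD /= trmx_mul trmxK.
have Hu : (B0 + e *m c^T)^T *m e = B0^T *m e + c by rewrite HT mulmxDl -mulmxA He mulmx1.
rewrite Hu HT !mulmxDl !mulmxDr linearD /= !trmx_mul trmxK !mulmxDr.
rewrite -!mulmxA !(mulmxA e^T e) He !mul1mx.
by rewrite !zm_aux.
Qed.
Lemma rank2 (F : fieldType) n p (u v : 'cV[F]_n) (H : 'M_(n,p)) :
  row_free H -> (forall a b : F, a *: u + b *: v = 0 -> a = 0 /\ b = 0) ->
  \rank (H^T *m (u *m u^T - v *m v^T) *m H) = 2%N.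
Proof.
move=> fH indep.
pose W : 'M[F]_(n, 1 + 1) := row_mx u v.
pose D : 'M[F]_(1 + 1) := block_mx 1%:M 0 0 (-1%:M).
have eM : u *m u^T - v *m v^T = W *m D *m W^T.
  rewrite /W /D mul_row_block !mulmx0 !mulmx1 addr0 add0r tr_row_mx mul_row_col.
  by rewrite mulmxN mulmx1 mulNmx.
have DD : D *m D = 1%:M.
  rewrite /D mulmx_block !mulmx0 !mul0mx !mulmx1 !addr0 !add0r mulmxN mulmx1 opprK.
  by rewrite -scalar_mx_block.
have fD : row_free D.
  apply/row_freeP; exists D; exact: DD.
have fWT : row_free W^T.
  apply: inj_row_free => x Hx.
  rewrite /W tr_row_mx -[x]hsubmxK mul_row_col in Hx.
  rewrite [lsubmx x]mx11_scalar [rsubmx x]mx11_scalar !mul_scalar_mx in Hx.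
  have := congr1 trmx Hx; rewrite linearD /= !linearZ /= !trmxK trmx0 => /indep [Ha Hb].
  rewrite -[x]hsubmxK [lsubmx x]mx11_scalar [rsubmx x]mx11_scalar Ha Hb.
  by rewrite !raddf0 row_mx0.
pose P := W^T *m H.
have fP : row_free P by rewrite /row_free /P mxrankMfree.
have -> : H^T *m (u *m u^T - v *m v^T) *m H = P^T *m D *m P.
  by rewrite eM /P trmx_mul trmxK !mulmxA.
rewrite mxrankMfree // -mxrank_tr trmx_mul mxrankMfree //.
by rewrite mxrank_tr; move/eqP: fD.
by rewrite trmxK.
Qed.

Lemma rank1 (F : fieldType) n p (w : 'cV[F]_n) (H : 'M_(n,p)) (s : F) :
  row_free H -> w != 0 -> s != 0 ->
  \rank (H^T *m (s *: (w *m w^T)) *m H) = 1%N.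
Proof.
move=> fH w0 s0.
have -> : H^T *m (s *: (w *m w^T)) *m H = s *: ((w^T *m H)^T *m (w^T *m H)).
  by rewrite -scalemxAr -scalemxAl trmx_mul trmxK !mulmxA.
rewrite mxrank_scale_nz //.
have r1 : \rank (w^T *m H) = 1%N.
  rewrite mxrankMfree // mxrank_tr.
  apply/eqP; rewrite eqn_leq rank_leq_col lt0n mxrank_eq0 //.
have f1 : row_free (w^T *m H) by rewrite /row_free r1.
by rewrite mxrankMfree // mxrank_tr.
Qed.
Theorem proposition1 (R : realType) (d p K : nat) (edge : rel 'I_d)
    (A0 Om0 : 'M[R]_d) (A Om : 'I_K -> 'M[R]_d)
    (ik : 'I_K -> 'I_d) (c : 'I_K -> 'cV[R]_d)
    (G : 'M[R]_(p, d)) (H : 'M[R]_(d, p))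
    (* DAG with topological order: every edge j -> i has j > i *)
    (Hedge : forall i j : 'I_d, edge j i -> (i < j)%N)
    (* context 0 *)
    (HA0diag : forall i : 'I_d, A0 i i = 0)
    (HA0supp : forall i j : 'I_d, (A0 i j != 0) = edge j i)
    (HOm0diag : is_diag_mx Om0)
    (HOm0pos : forall i : 'I_d, 0 < Om0 i i)
    (* contexts k in [K] *)
    (HAdiag : forall (k : 'I_K) (i : 'I_d), A k i i = 0)
    (HAsupp : forall (k : 'I_K) (i j : 'I_d), A k i j != 0 -> edge j i)
    (HOmdiag : forall k : 'I_K, is_diag_mx (Om k))
    (HOmpos : forall (k : 'I_K) (i : 'I_d), 0 < Om k i i)
    (* single-node intervention *)
    (Hint : forall k : 'I_K,
       Bmat (Om k) (A k) = Bmat Om0 A0 + evec R (ik k) *m (c k)^T)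
    (* the intervention genuinely changes the mechanism of node ik k *)
    (Hc : forall k : 'I_K, c k != 0)
    (Hnondeg : forall k : 'I_K, ~ is_source edge (ik k) ->
       forall a : R, (Bmat (Om k) (A k))^T *m evec R (ik k)
                     <> a *: ((Bmat Om0 A0)^T *m evec R (ik k)))
    (* mixing *)
    (Hpd : (d <= p)%N) (HGrank : \rank G = d)
    (HHpinv : is_MP_pinv G H) (HHnorm : rows_normalized H) :
  forall k : 'I_K,
    [/\ Theta H (Om k) (A k) - Theta H Om0 A0
          = outer (H^T *m (Bmat (Om k) (A k))^T *m evec R (ik k))
            - outer (H^T *m (Bmat Om0 A0)^T *m evec R (ik k)),
        is_source edge (ik k) -> \rank (Theta H (Om k) (A k) - Theta H Om0 A0) = 1%N
      & ~ is_source edge (ik k) -> \rank (Theta H (Om k) (A k) - Theta H Om0 A0) = 2%N].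
Proof.
move=> k.
set i := ik k.
set e := evec R i.
set Bk := Bmat (Om k) (A k).
set B0 := Bmat Om0 A0.
have He : e^T *m e = 1%:M by exact: evecTe.
have Hu : Bk^T *m e = B0^T *m e + c k.
  rewrite /Bk Hint -/i -/e linearD /= [(e *m _)^T]trmx_mul trmxK mulmxDl -mulmxA He mulmx1.
  by [].
set u := Bk^T *m e.
set v := B0^T *m e.
have eq1 : Theta H (Om k) (A k) - Theta H Om0 A0
    = H^T *m (u *m u^T - v *m v^T) *m H.
  rewrite /Theta -/Bk -/B0 /u /v /Bk Hint -diff_outer // -/B0.
  by rewrite mulmxBr mulmxBl !mulmxA.
have eq2 : outer (H^T *m Bk^T *m e) - outer (H^T *m B0^T *m e) = H^T *m (u *m u^T - v *m v^T) *m H.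
  rewrite -[H^T *m Bk^T *m e]mulmxA -[H^T *m B0^T *m e]mulmxA -/u -/v /outer [(H^T *m u)^T]trmx_mul [(H^T *m v)^T]trmx_mul trmxK.
  by rewrite mulmxBr mulmxBl !mulmxA.
have fH : row_free H.
  rewrite /row_free eqn_leq rank_leq_row /=.
  case: HHpinv => h1 _ _ _.
  rewrite -{1}HGrank -{1}h1.
  exact: leq_trans (mxrankM_maxl _ _) (mxrankM_maxr _ _).
have e0 : e != 0.
  by apply/negP => /eqP/matrixP/(_ i 0); rewrite /e evec_entry eqxx mxE; apply/eqP; rewrite oner_eq0.
split.
- by rewrite eq1 eq2.
- move=> src.
  have rowA : forall (M : 'M[R]_d), (forall j, M i j != 0 -> edge j i) ->
     forall Omm : 'M[R]_d,
     (Bmat Omm M)^T *m e = (Num.sqrt (Omm i i))^-1 *: e.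
    move=> M hM Omm; apply/matrixP => j l; rewrite !ord1.
    rewrite col_entry Bmat_entry mxE /e evec_entry.
    have -> : M i j = 0.
      by apply/eqP; apply: contraNT (src j) => /hM.
    by rewrite subr0.
  set a := (Num.sqrt (Om k i i))^-1.
  set b := (Num.sqrt (Om0 i i))^-1.
  have ua : u = a *: e by apply: rowA => // j; exact: HAsupp.
  have vb : v = b *: e by apply: rowA => // j; rewrite HA0supp.
  have a0 : 0 < a by rewrite invr_gt0 sqrtr_gt0.
  have b0 : 0 < b by rewrite invr_gt0 sqrtr_gt0.
  rewrite eq1.
  have -> : u *m u^T - v *m v^T = (a * a - b * b) *: (e *m e^T).
    by rewrite ua vb !linearZ /= -!scalemxAl !scalerN !scalerA scalerBl.
  rewrite rank1 //.
  have -> : a * a - b * b = (a - b) * (a + b) by rewrite mulrDr !mulrBl; rewrite [b * a]mulrC addrA subrK.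
  rewrite mulf_neq0 //; last by rewrite gt_eqF // addr_gt0.
  apply/negP; rewrite subr_eq0 => /eqP ab.
  have := Hc k; rewrite (_ : c k = u - v).
    by rewrite ua vb ab subrr eqxx.
  by rewrite /u Hu addrC addKr.
- move=> nsrc.
  rewrite eq1 rank2 //.
  have v0 : v != 0.
    apply/negP => /eqP/matrixP/(_ i 0).
    rewrite /v col_entry Bmat_entry eqxx HA0diag subr0 mulr1 mxE.
    by apply/eqP; rewrite invr_eq0 gt_eqF // sqrtr_gt0.
  move=> x y Hxy.
  have hx : x = 0.
    apply/eqP/negP => /negP x0.
    apply: (Hnondeg k nsrc (- (y / x))).
    have : x *: u = - (y *: v) by apply/eqP; rewrite -addr_eq0 Hxy.
    move=> /(congr1 (fun w => x^-1 *: w)).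
    rewrite -/i -/e -/Bk -/B0 -/u -/v !scalerA mulVf // scale1r => ->.
    by rewrite scalerN scalerA scaleNr mulrC.
  split => //.
  move: Hxy; rewrite hx scale0r add0r => /eqP.
  by rewrite scalemx_eq0 (negbTE v0) orbF => /eqP.
Qed.
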